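(* Let $k\in\mathbb Z_{\ge1}$. With probability $1-\mathrm{negl}(n)$ over $G\sim G(n,1/2)$ the following holds: for every vertex set $S\subseteq[n]$ of size $k$ and every family $\mathcal B\subseteq\{B:\emptyset\ne B\subseteq S\}$ there exists a vertex $v\notin S$ such that for every $\emptyset\ne B\subseteq S$, we have $B\in\mathcal B$ if and only if the number of vertices that are adjacent to every vertex in $\{v\}\cup B$ and non-adjacent to every vertex in $S\setminus B$ is odd.
   Context: $G(n,1/2)$ is the uniform distribution over simple graphs on vertex set $[n]$ (each pair an edge independently with probability $1/2$). A function is negligible ($\mathrm{negl}(n)$) if eventually below $1/p(n)$ in absolute value for every polynomial $p$. *)

(* Defs.v *)
From mathcomp Require Import all_boot all_order all_algebra.
Set Implicit Arguments. Unset Strict Implicit. Unset Printing Implicit Defensive.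
Import Order.TTheory GRing.Theory Num.Theory.

Definition simple_graph (n : nat) (E : {set {set 'I_n}}) : bool :=
  [forall e in E, #|e| == 2].

(* Adjacency: u ~ v iff {u,v} is an edge (never holds for u = v). *)
Definition adj (n : nat) (E : {set {set 'I_n}}) (u v : 'I_n) : bool :=
  [set u; v] \in E.

Definition pattern_set (n : nat) (E : {set {set 'I_n}}) (S B : {set 'I_n}) (v : 'I_n)
  : {set 'I_n} :=
  [set w | [forall u in v |: B, adj E w u] && [forall u in S :\: B, ~~ adj E w u]].

Definition good_event (k n : nat) (E : {set {set 'I_n}}) : bool :=
  [forall S : {set 'I_n}, (#|S| == k) ==>
    [forall F : {set {set 'I_n}},
      (F \subset [set B : {set 'I_n} | (B != set0) && (B \subset S)]) ==>
      [exists v : 'I_n, (v \notin S) &&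
        [forall B : {set 'I_n}, ((B != set0) && (B \subset S)) ==>
           ((B \in F) == odd #|pattern_set E S B v|)]]]].

(* Probability, under G(n,1/2) (uniform over simple graphs on [n]), that the event fails. *)
Definition fail_prob (k n : nat) : rat :=
  (#|[set E : {set {set 'I_n}} | simple_graph E && ~~ good_event k E]|%:R
   / #|[set E : {set {set 'I_n}} | simple_graph E]|%:R)%R.

Definition negligible (f : nat -> rat) : Prop :=
  forall c : nat, exists N : nat, forall n : nat, (N <= n)%N ->
    (`|f n| < ((n%:R : rat) ^+ c)^-1)%R.

(* Main.v *)
Require Import Defs.
From mathcomp Require Import all_boot all_order all_algebra.
From mathcomp Require Import zify ring.
Set Implicit Arguments. Unset Strict Implicit. Unset Printing Implicit Defensive.


Lemma card_bigcup_le (I T : finType) (P : pred I) (A : I -> {set T}) :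
  #|\bigcup_(i | P i) A i| <= \sum_(i | P i) #|A i|.
Proof.
elim/big_rec2: _ => [|i X s _ H]; first by rewrite cards0.
by apply: leq_trans (leq_card_setU _ _) _; rewrite leq_add2l.
Qed.

Lemma double_count (T G : finType) (A Bad : {set T}) (act : G -> T -> T) (c m : nat) :
  Bad \subset A ->
  (forall g x, x \in A -> act g x \in A) ->
  (forall g, {in A &, injective (act g)}) ->
  (forall x, x \in A -> #|[set g | act g x \in Bad]| * m <= c) ->
  #|Bad| * #|G| * m <= c * #|A|.
Proof.
move=> sBA actA actI Hc.
have H1 g : #|Bad| <= #|[set x in A | act g x \in Bad]|.
  have eA : act g @: A = A.
    apply/eqP; rewrite eqEcard card_in_imset // leqnn andbT.
    by apply/subsetP=> y /imsetP[x xA ->]; apply: actA.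
  apply: leq_trans (leq_imset_card (act g) _).
  apply: subset_leq_card; apply/subsetP=> y yB.
  have := subsetP sBA y yB; rewrite -{1}eA => /imsetP[x xA exy].
  by apply/imsetP; exists x => //; rewrite inE xA -exy yB.
have E1 : #|Bad| * #|G| <= \sum_(g : G) #|[set x in A | act g x \in Bad]|.
  rewrite -[#|G|]sum1_card big_distrr /=.
  by apply: leq_sum => g _; rewrite muln1 H1.
apply: leq_trans (leq_mul E1 (leqnn m)) _.
have E2 : \sum_(g : G) #|[set x in A | act g x \in Bad]| =
          \sum_(x in A) #|[set g | act g x \in Bad]|.
  rewrite (eq_bigr (fun g => \sum_(x in A) (act g x \in Bad : nat))); last first.
    by move=> g _; rewrite -sum1dep_card big_mkcondr /=;
       apply: eq_bigr => x _; case: (act g x \in Bad).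
  rewrite exchange_big /=; apply: eq_bigr => x _.
  by rewrite -sum1dep_card [RHS]big_mkcond /=; apply: eq_bigr => g _; case: (act g x \in Bad).
rewrite E2 big_distrl -sum1_card big_distrr /=.
by apply: leq_sum => x xA; rewrite muln1; apply: Hc.
Qed.


Lemma card_family_prod (I : finType) (rT : finType) (F : I -> pred rT) :
  #|(family F : simpl_pred {ffun I -> rT})| = \prod_(i : I) #|F i|.
Proof.
rewrite (card_family F) foldrE big_map big_enum /=. by [].
Qed.

Lemma prod_if2 (I : finType) (R : {set I}) (a b : nat) :
  \prod_(i : I) (if i \in R then a else b) = a ^ #|R| * b ^ #|~: R|.
Proof.
rewrite (bigID (mem R)) /=.
rewrite (eq_bigr (fun _ => a)); last by move=> i ->.
rewrite [X in _ * X](eq_bigr (fun _ => b)); last by move=> i /negbTE ->.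
rewrite !prod_nat_const; congr (_ ^ _ * _ ^ _).
by apply: eq_card => i; rewrite !inE.
Qed.

Lemma count_row_eq (J : finType) (Cs : {set J}) (t : J -> bool) :
  #|[set h : {ffun J -> bool} | [forall j in Cs, h j == t j]]| = 2 ^ #|~: Cs|.
Proof.
pose F j := if j \in Cs then pred1 (t j) else predT.
transitivity #|(family F : simpl_pred {ffun J -> bool})|.
  apply: eq_card => h; rewrite inE; apply/forall_inP/familyP => H j.
    by rewrite /F; case: ifP => // jC; rewrite inE; apply: H.
  by move=> jC; have := H j; rewrite /F jC inE.
rewrite card_family_prod (eq_bigr (fun j => if j \in Cs then 1 else 2)).
  by rewrite prod_if2 exp1n mul1n.
move=> j _; rewrite /F; case: ifP => _; first by rewrite card1.
by rewrite -card_bool; apply: eq_card.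
Qed.

Lemma count_row_neq (J : finType) (Cs : {set J}) (t : J -> bool) :
  #|[set h : {ffun J -> bool} | [exists j in Cs, h j != t j]]| = (2 ^ #|Cs| - 1) * 2 ^ #|~: Cs|.
Proof.
have H := cardsC [set h : {ffun J -> bool} | [forall j in Cs, h j == t j]].
rewrite count_row_eq card_ffun card_bool -(cardsC Cs) expnD in H.
have -> : [set h : {ffun J -> bool} | [exists j in Cs, h j != t j]] =
          ~: [set h : {ffun J -> bool} | [forall j in Cs, h j == t j]].
  by apply/setP => h; rewrite !inE negb_forall; apply/existsP/existsP => -[j Hj]; exists j;
     move: Hj; rewrite negb_imply.
rewrite mulnBl mul1n; apply/eqP; rewrite -(eqn_add2l (2 ^ #|~: Cs|)) H.
by rewrite subnKC // leq_pmull // expn_gt0.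
Qed.

Lemma count_rows (I J : finType) (R : {set I}) (Cs : {set J}) (t : I -> J -> bool) :
  #|[set g : {ffun I -> {ffun J -> bool}} | [forall i in R, exists j in Cs, g i j != t i j]]|
    * 2 ^ (#|Cs| * #|R|)
  = (2 ^ #|Cs| - 1) ^ #|R| * #|{ffun I -> {ffun J -> bool}}|.
Proof.
pose F i := if i \in R then mem [set h : {ffun J -> bool} | [exists j in Cs, h j != t i j]]
            else mem (predT : pred {ffun J -> bool}).
have -> : #|[set g : {ffun I -> {ffun J -> bool}} | [forall i in R, exists j in Cs, g i j != t i j]]|
   = #|(family F : simpl_pred {ffun I -> {ffun J -> bool}})|.
  apply: eq_card => g; rewrite inE; apply/forall_inP/familyP => H i.
    by rewrite /F; case: ifP => // iR; rewrite inE; apply: H.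
  by move=> iR; have := H i; rewrite /F iR inE.
rewrite card_family_prod.
rewrite (eq_bigr (fun i => if i \in R then (2 ^ #|Cs| - 1) * 2 ^ #|~: Cs| else 2 ^ #|J|)); last first.
  move=> i _; rewrite /F; case: ifP => _; first by rewrite count_row_neq.
  by rewrite -(card_bool) -card_ffun; apply: eq_card.
rewrite prod_if2 card_ffun card_ffun card_bool -(cardsC R) -(cardsC Cs).
rewrite expnMn mulnC expnM.
rewrite !expnD !expnMn -!expnM.
rewrite -!mulnA; exact: mulnCA.

Qed.


Section G.
Variable n : nat.
Implicit Types (E D : {set {set 'I_n}}) (S B : {set 'I_n}) (u v w : 'I_n).

Lemma pair2_eq (a b c d : 'I_n) : [set a; b] = [set c; d] ->
  (a = c /\ b = d) \/ (a = d /\ b = c).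
Proof.
move=> e.
have ha : a \in [set c; d] by rewrite -e !inE eqxx.
have hb : b \in [set c; d] by rewrite -e !inE eqxx orbT.
have hc : c \in [set a; b] by rewrite e !inE eqxx.
have hd : d \in [set a; b] by rewrite e !inE eqxx orbT.
move: ha hb hc hd; rewrite !inE.
case: (a =P c) => [ac|nac] /=.
  move=> _ /orP[/eqP bc|/eqP bd] _; last by left.
  subst a b => /orP[/eqP dc|/eqP dc]; by left; split.
move=> /eqP ad _ /orP[/eqP ca|/eqP cb]; first by case: nac.
by move=> _; right.
Qed.

Definition tog E D : {set {set 'I_n}} := (E :\: D) :|: (D :\: E).

Lemma in_tog E D X : (X \in tog E D) = (X \in E) (+) (X \in D).
Proof. by rewrite !inE; case: (X \in E); case: (X \in D). Qed.

Lemma togK E D : tog (tog E D) D = E.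
Proof. by apply/setP => X; rewrite !in_tog; case: (X \in E); case: (X \in D). Qed.

Lemma adj_tog E D u v : adj (tog E D) u v = adj E u v (+) ([set u; v] \in D).
Proof. by rewrite /adj in_tog. Qed.

Lemma simple_tog E D : simple_graph E -> (forall X, X \in D -> #|X| == 2) ->
  simple_graph (tog E D).
Proof.
move=> /forall_inP sE sD; apply/forall_inP => X; rewrite in_tog.
by case XE: (X \in E) => /=; [move=> _; apply: sE | apply: sD].
Qed.

Definition cellp E S B w := [forall u in S, adj E w u == (u \in B)].

Lemma pattern_cell E S B v : B \subset S ->
  pattern_set E S B v = [set w | adj E w v && cellp E S B w].
Proof.
move=> sBS; apply/setP => w; rewrite !inE; apply/andP/andP.
  case=> /forall_inP H1 /forall_inP H2; split; first by apply: H1; rewrite !inE eqxx.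
  apply/forall_inP => u uS; case uB: (u \in B).
    by apply/eqP; apply: H1; rewrite !inE uB orbT.
  by apply/eqP/negbTE; apply: H2; rewrite !inE uB.
case=> Hv /forall_inP H; split; apply/forall_inP => u.
  rewrite !inE => /orP[/eqP -> //|uB].
  by have /eqP -> := H u (subsetP sBS u uB).
by rewrite !inE => /andP[uB uS]; have /eqP -> := H u uS; rewrite (negbTE uB).
Qed.

Lemma cellp_tog E D S B w : (forall u, u \in S -> [set w; u] \notin D) ->
  cellp (tog E D) S B w = cellp E S B w.
Proof.
move=> H; apply: eq_forallb_in => u uS.
by rewrite adj_tog (negbTE (H u uS)) addbF.
Qed.

Lemma cellp_uniq E S B B' w : B \subset S -> B' \subset S ->
  cellp E S B w -> cellp E S B' w -> B = B'.
Proof.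
move=> sB sB' /forall_inP h /forall_inP h'; apply/setP => u.
case uS: (u \in S); last first.
  by rewrite (contraFF (subsetP sB u) uS) (contraFF (subsetP sB' u) uS).
by have /eqP <- := h u uS; have /eqP <- := h' u uS.
Qed.

Lemma odd_tog1 (A : {set 'I_n}) (r : 'I_n) :
  odd #|[set w | (w \in A) (+) (w == r)]| = ~~ odd #|A|.
Proof.
case rA: (r \in A).
  have -> : [set w | (w \in A) (+) (w == r)] = A :\ r.
    by apply/setP => w; rewrite !inE; case: (w =P r) => [->|_]; rewrite ?rA ?addbT ?addbF.
  by rewrite (cardsD1 r A) rA /= negbK.
have -> : [set w | (w \in A) (+) (w == r)] = r |: A.
  apply/setP => w; rewrite !inE; case: (w =P r) => [->|_]; rewrite ?rA ?addbT ?addbF //.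
by rewrite cardsU1 rA.
Qed.

End G.


Section P2.
Variable n : nat.
Implicit Types (E D : {set {set 'I_n}}) (S B : {set 'I_n}) (u v w : 'I_n).

Definition Uset S : {set 'I_n} := [set i : 'I_n | i < n./2] :\: S.
Definition Wset S : {set 'I_n} := [set i : 'I_n | n./2 <= i] :\: S.

Lemma UW_disj S v : v \in Uset S -> v \notin Wset S.
Proof. by rewrite !inE negb_and => /andP[_ h]; rewrite -ltnNge h orbT. Qed.
Lemma U_notS S v : v \in Uset S -> v \notin S.
Proof. by rewrite !inE => /andP[]. Qed.
Lemma W_notS S v : v \in Wset S -> v \notin S.
Proof. by rewrite !inE => /andP[]. Qed.

Definition D2 S (g : {ffun 'I_n -> {ffun 'I_n -> bool}}) : {set {set 'I_n}} :=
  [set [set w; s] | w in Wset S, s in S & g w s].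

Lemma D2_2 S g X : X \in D2 S g -> #|X| == 2.
Proof.
case/imset2P => w s wW; rewrite inE => /andP[sS _] ->.
rewrite cards2; have -> // : w != s by apply: contraNneq (W_notS wW) => ->.
Qed.

Lemma in_D2 S g w s : w \in Wset S -> s \in S -> ([set w; s] \in D2 S g) = g w s.
Proof.
move=> wW sS; apply/imset2P/idP => [[w' s' w'W]|gws]; last first.
  by exists w s => //; rewrite inE sS.
rewrite inE => /andP[s'S g'] /pair2_eq [[-> ->] //|[ws' sw']].
by move: (W_notS wW); rewrite ws' s'S.
Qed.

Definition act2 S g E := tog E (D2 S g).

Definition NoCellB S B : {set {set {set 'I_n}}} :=
  [set E | simple_graph E && [forall w in Wset S, ~~ cellp E S B w]].

Definition Simple : {set {set {set 'I_n}}} := [set E | simple_graph E].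

Lemma card_G (I J : finType) : 0 < #|{ffun I -> {ffun J -> bool}}|.
Proof. by rewrite card_ffun expn_gt0 card_ffun card_bool expn_gt0. Qed.

Lemma NoCellB_bound S B :
  #|NoCellB S B| * 2 ^ (#|S| * #|Wset S|) <= (2 ^ #|S| - 1) ^ #|Wset S| * #|Simple|.
Proof.
have H := @double_count _ {ffun 'I_n -> {ffun 'I_n -> bool}} Simple (NoCellB S B) (act2 S)
  ((2 ^ #|S| - 1) ^ #|Wset S| * #|{ffun 'I_n -> {ffun 'I_n -> bool}}|) (2 ^ (#|S| * #|Wset S|)).
rewrite -mulnA [_ * 2 ^ _]mulnC mulnA -[X in _ <= X]mulnA [_ * #|Simple|]mulnC mulnA in H.
rewrite -(leq_pmul2r (card_G 'I_n 'I_n)); apply: H.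
- by apply/subsetP => E; rewrite !inE => /andP[].
- by move=> g E; rewrite !inE => sE; apply: simple_tog => // X; apply: D2_2.
- move=> g; apply: in2W; apply: (can_inj (g := act2 S g)) => E; exact: togK.
move=> E _.
rewrite -(count_rows (Wset S) S (fun w s => adj E w s (+) (s \in B))) leq_mul2r; apply/orP; right.
apply: subset_leq_card; apply/subsetP => g; rewrite !inE => /andP[_ /forall_inP H].
apply/forall_inP => w wW; have := H w wW; rewrite negb_forall_in => /exists_inP[s sS].
rewrite /act2 adj_tog in_D2 // => hs; apply/exists_inP; exists s => //.
by move: hs; case: (adj E w s); case: (g w s); case: (s \in B).
Qed.

End P2.


Section P1.
Variable n : nat.
Implicit Types (E D : {set {set 'I_n}}) (S B : {set 'I_n}) (u v w : 'I_n).

Definition Bs S : {set {set 'I_n}} := [set B : {set 'I_n} | (B != set0) && (B \subset S)].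
Definition cellW E S B : {set 'I_n} := [set w in Wset S | cellp E S B w].
Definition isrep E S B w := [pick w' in cellW E S B] == Some w.

Definition D1 S E (g : {ffun 'I_n -> {ffun {set 'I_n} -> bool}}) : {set {set 'I_n}} :=
  [set [set v; w] | v in Uset S, w in Wset S & [exists B in Bs S, g v B && isrep E S B w]].

Definition act1 S g E := tog E (D1 S E g).

Definition nice S E := [forall B in Bs S, exists w in Wset S, cellp E S B w].

Definition BadSF S (F : {set {set 'I_n}}) : {set {set {set 'I_n}}} :=
  [set E | [&& simple_graph E, nice S E &
     [forall v in Uset S, exists B in Bs S, (B \in F) != odd #|pattern_set E S B v|]]].

Definition NiceA S : {set {set {set 'I_n}}} := [set E | simple_graph E && nice S E].

Lemma D1_noS S E g w u : u \in S -> [set w; u] \notin D1 S E g.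
Proof.
move=> uS; apply/imset2P => -[v w' vU]; rewrite inE => /andP[w'W _] /pair2_eq [[_ e]|[_ e]].
  by move: (W_notS w'W); rewrite -e uS.
by move: (U_notS vU); rewrite -e uS.
Qed.

Lemma D1_2 S E g X : X \in D1 S E g -> #|X| == 2.
Proof.
case/imset2P => v w vU; rewrite inE => /andP[wW _] ->.
rewrite cards2; have -> // : v != w by apply: contraNneq (UW_disj vU) => ->.
Qed.

Lemma cellp_act1 S E g B w : cellp (act1 S g E) S B w = cellp E S B w.
Proof. by apply: cellp_tog => u uS; apply: D1_noS. Qed.

Lemma D1_act1 S E g : D1 S (act1 S g E) g = D1 S E g.
Proof.
have eW B : cellW (act1 S g E) S B = cellW E S B.
  by apply/setP => w; rewrite !inE cellp_act1.
have eR v w : [exists B in Bs S, g v B && isrep (act1 S g E) S B w] =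
              [exists B in Bs S, g v B && isrep E S B w].
  by apply: eq_existsb_in => B _; rewrite /isrep eW.
apply/setP => X; apply/imset2P/imset2P => -[v w vU wP ->]; exists v w => //;
  by move: wP; rewrite !inE eR.
Qed.

Lemma act1K S g E : act1 S g (act1 S g E) = E.
Proof. by rewrite /act1 D1_act1 togK. Qed.

Lemma nice_act1 S g E : nice S (act1 S g E) = nice S E.
Proof.
by apply: eq_forallb_in => B _; apply: eq_existsb_in => w _; rewrite cellp_act1.
Qed.

Lemma in_D1 S E g v w : v \in Uset S ->
  ([set w; v] \in D1 S E g) = (w \in Wset S) && [exists B in Bs S, g v B && isrep E S B w].
Proof.
move=> vU; apply/imset2P/idP => [[v' w' v'U]|/andP[wW h]]; last first.
  by exists v w => //; [rewrite inE wW | rewrite setUC].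
rewrite inE => /andP[w'W h] /pair2_eq [[e1 e2]|[e1 e2]].
  by move: (UW_disj vU); rewrite e2 w'W.
by rewrite e1 e2 w'W.
Qed.

Lemma isrep_cell E S B w : isrep E S B w -> (w \in Wset S) && cellp E S B w.
Proof.
rewrite /isrep; case: pickP => [w' h /eqP [<-]|_ //].
by move: h; rewrite inE.
Qed.

Lemma odd_act1 S E g v B : nice S E -> v \in Uset S -> B \in Bs S ->
  odd #|pattern_set (act1 S g E) S B v| = odd #|pattern_set E S B v| (+) g v B.
Proof.
move=> nE vU BB; have sBS : B \subset S by move: BB; rewrite inE => /andP[].
have [r rep] : exists r, isrep E S B r.
  move: nE => /forall_inP /(_ B BB) /exists_inP [w0 w0W c0].
  rewrite /isrep; case: pickP => [r _|h]; first by exists r.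
  by move: (h w0); rewrite inE w0W c0.
have e : [set w | adj (act1 S g E) w v && cellp (act1 S g E) S B w] =
         [set w | (adj E w v (+) (g v B && (w == r))) && cellp E S B w].
  apply/setP => w; rewrite !inE cellp_act1 /act1 adj_tog in_D1 //.
  case cw: (cellp E S B w); rewrite ?andbF ?andbT //; congr (_ (+) _).
  apply/andP/idP => [[wW /exists_inP[B' B'B /andP[gB' rB']]]|].
    have /andP[_ cB'] := isrep_cell rB'.
    have sB'S : B' \subset S by move: B'B; rewrite inE => /andP[].
    have eB := cellp_uniq sBS sB'S cw cB'; subst B'.
    by rewrite gB' /=; move: rB' rep; rewrite /isrep => /eqP -> /eqP [->].
  case/andP => gB /eqP wr; subst w.
  have /andP[rW _] := isrep_cell rep.
  by split => //; apply/exists_inP; exists B => //; rewrite gB rep.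
rewrite !pattern_cell // e.
case gvB: (g v B); last by rewrite addbF; congr (odd _); apply: eq_card => w; rewrite !inE /= addbF.
have /andP[_ cr] := isrep_cell rep.
rewrite addbT -(odd_tog1 _ r); congr (odd _); apply: eq_card => w; rewrite !inE.
by case: (w =P r) => [->|_]; rewrite ?cr ?andbT ?addbT ?addbF ?andbF.
Qed.

Lemma BadSF_bound S F :
  #|BadSF S F| * 2 ^ (#|Bs S| * #|Uset S|) <= (2 ^ #|Bs S| - 1) ^ #|Uset S| * #|Simple n|.
Proof.
have H := @double_count _ {ffun 'I_n -> {ffun {set 'I_n} -> bool}} (NiceA S) (BadSF S F) (act1 S)
  ((2 ^ #|Bs S| - 1) ^ #|Uset S| * #|{ffun 'I_n -> {ffun {set 'I_n} -> bool}}|) (2 ^ (#|Bs S| * #|Uset S|)).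
rewrite -mulnA [_ * 2 ^ _]mulnC mulnA -[X in _ <= X]mulnA [_ * #|NiceA S|]mulnC mulnA in H.
rewrite -(leq_pmul2r (card_G 'I_n {set 'I_n})).
apply: (leq_trans (H _ _ _ _)); first 4 last.
- rewrite leq_mul2r; apply/orP; right; rewrite leq_mul2l; apply/orP; right.
  by apply: subset_leq_card; apply/subsetP => E; rewrite !inE => /andP[].
- by apply/subsetP => E; rewrite !inE => /and3P[-> ->].
- move=> g E; rewrite !inE => /andP[sE nE]; rewrite nice_act1 nE andbT.
  by apply: simple_tog => // X; apply: D1_2.
- move=> g; apply: in2W; apply: (can_inj (g := act1 S g)) => E; exact: act1K.
move=> E; rewrite inE => /andP[_ nE].
rewrite -(count_rows (Uset S) (Bs S) (fun v B => (B \in F) (+) odd #|pattern_set E S B v|)) leq_mul2r.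
apply/orP; right.
apply: subset_leq_card; apply/subsetP => g; rewrite !inE => /and3P[_ _ /forall_inP H1].
apply/forall_inP => v vU; have /exists_inP[B BB hB] := H1 v vU.
apply/exists_inP; exists B => //; move: hB; rewrite odd_act1 //.
by case: (B \in F); case: (g v B); case: (odd _).
Qed.

End P1.


Lemma succ_le_pow2 x : x.+1 <= 2 ^ x.
Proof. elim: x => // x IH; rewrite expnS; have := expn_gt0 2 x; lia. Qed.

Lemma polyL e a : 0 < a -> exists D, forall j, j ^ e <= D * 2 ^ (j %/ a).
Proof.
elim: e a => [|e IH] a a0; first by exists 1 => j; rewrite expn0 mul1n expn_gt0.
have a2 : 0 < 2 * a by rewrite muln_gt0 a0.
have [D HD] := IH (2 * a) a2.
exists (2 * a * D) => j.
have base : j <= 2 * a * 2 ^ (j %/ (2 * a)).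
  have h1 : j < (j %/ (2 * a)).+1 * (2 * a) by exact: ltn_ceil.
  have h2 := succ_le_pow2 (j %/ (2 * a)).
  apply: leq_trans (ltnW h1) _; rewrite mulnC; exact: leq_mul.
have h3 : 2 * (j %/ (2 * a)) <= j %/ a.
  by rewrite [2 * a]mulnC divnMA mulnC leq_divM.
rewrite expnS; apply: leq_trans (leq_mul base (HD j)) _.
rewrite mulnACA leq_mul2l; apply/orP; right.
by rewrite -expnD addnn -mul2n leq_pexp2l.
Qed.

Lemma evY e C : exists Y, forall y, Y <= y -> y.+1 ^ e * C < 2 ^ y.
Proof.
have [D HD] := polyL e (isT : 0 < 2).
exists (2 * (D * C) + 2) => y hy.
set h := y.+1 %/ 2.
have hd := divn_eq y.+1 2; have hm := ltn_pmod y.+1 (isT : 0 < 2).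
rewrite -/h in hd.
have hDC : D * C < 2 ^ h.-1.
  apply: leq_trans (succ_le_pow2 _); lia.
have hy2 : 2 ^ h.-1 * 2 ^ h <= 2 ^ y.
  by rewrite -expnD leq_pexp2l //; lia.
apply: leq_ltn_trans (leq_mul (HD y.+1) (leqnn C)) _.
rewrite -/h mulnAC.
apply: leq_trans hy2; rewrite ltn_pmul2r ?expn_gt0 //.
Qed.

Lemma leq_powr a b e : a <= b -> a ^ e <= b ^ e.
Proof. by move=> ab; elim: e => // e IH; rewrite !expnS; exact: leq_mul. Qed.

Lemma evN e C k M : 0 < M -> exists N, forall n, N <= n -> n ^ e * C < 2 ^ ((n./2 - k) %/ M).
Proof.
move=> M0.
set A := 2 * M + 2 * k + 2.
have [Y HY] := evY e (A ^ e * C).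
exists (2 * (Y * M + k) + 2) => n hn.
set y := (n./2 - k) %/ M.
have hd := divn_eq n 2; have hm := ltn_pmod n (isT : 0 < 2).
rewrite divn2 in hd.
have hc := ltn_ceil (n./2 - k) M0; rewrite -/y in hc.
have hyY : Y <= y by rewrite /y leq_divRL //; lia.
have hnA : n <= A * y.+1 by rewrite /A; nia.
apply: leq_ltn_trans (HY y hyY).
apply: leq_trans (leq_mul (leq_powr e hnA) (leqnn C)) _.
by rewrite expnMn mulnA [A ^ e * _]mulnC.
Qed.


Lemma bern x m : x ^ m.+1 + m.+1 * x ^ m <= x.+1 ^ m.+1.
Proof.
elim: m => [|m IH]; first by rewrite !expn1 expn0 muln1 addn1.
rewrite (expnS x m.+1) (expnS x.+1 m.+1) (expnS x m).
move: IH; rewrite (expnS x m); set P := x ^ m; set Q := x.+1 ^ m.+1 => IH.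
nia.
Qed.

Lemma half_bound M : 0 < M -> 2 * M.-1 ^ M <= M ^ M.
Proof.
case: M => // x _ /=.
have := bern x x; rewrite (expnS x x).
nia.
Qed.

Section RatPart.
Import Order.TTheory GRing.Theory Num.Theory.
Local Open Scope ring_scope.

Definition qq (M : nat) : rat := 1 - (M%:R)^-1.

Lemma qq_ge0 M : 0 <= qq M.
Proof.
rewrite /qq subr_ge0; case: M => [|M]; first by rewrite invr0 ler01.
by rewrite invf_le1 ?ltr0Sn // ler1n.
Qed.

Lemma qq_le1 M : qq M <= 1.
Proof. by rewrite /qq lerBlDr lerDl invr_ge0 ler0n. Qed.

Lemma qq_eq (m : nat) : qq m.+1 = m%:R / m.+1%:R.
Proof.
rewrite /qq -addn1 natrD.
have h : (m%:R + 1 : rat) != 0 by rewrite natr1 pnatr_eq0.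
by field.
Qed.

Lemma qq_pow (M : nat) : (0 < M)%N -> qq M ^+ M <= 2^-1.
Proof.
case: M => // m _; rewrite qq_eq expr_div_n -!natrX.
rewrite ler_pdivrMr ?ltr0n ?expn_gt0 // ler_pdivlMl ?ltr0n // -natrM ler_nat.
exact: (half_bound (isT : (0 < m.+1)%N)).
Qed.

Lemma qq_mono P M : (0 < P)%N -> (P <= M)%N -> qq P <= qq M.
Proof.
move=> P0 PM; rewrite /qq lerB // lef_pV2 ?inE ?ltr0n ?ler_nat //.
- by rewrite qualifE /= ltr0n (leq_trans P0 PM).
- by rewrite qualifE /= ltr0n.
Qed.

Lemma term_bound (a T K u x M : nat) : (2^K <= M)%N -> (x <= u)%N ->
  (a * 2^(K*u) <= (2^K - 1)^u * T)%N -> (a%:R : rat) <= T%:R * qq M ^+ x.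
Proof.
move=> KM xu H.
have P0 : (0 < 2^K)%N by rewrite expn_gt0.
have eP : ((2^K - 1)%:R / (2^K)%:R : rat) = qq (2^K).
  have := qq_eq (2^K).-1; rewrite (prednK P0) => ->; by rewrite subn1.
have h1 : (a%:R : rat) <= T%:R * qq (2^K) ^+ u.
  rewrite -eP expr_div_n -!natrX mulrA ler_pdivlMr ?ltr0n ?expn_gt0 //.
  by rewrite -!natrM ler_nat -expnM [(T * _)%N]mulnC.
apply: (le_trans h1); rewrite ler_wpM2l ?ler0n //.
apply: (le_trans (lerXn2r u _ _ (qq_mono P0 KM))); rewrite ?inE ?qq_ge0 //.
- by rewrite qualifE /= qq_ge0.
- by rewrite qualifE /= qq_ge0.
exact: ler_wiXn2l (qq_ge0 M) (qq_le1 M) _ _ xu.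
Qed.

End RatPart.


Lemma card_lt n m : m <= n -> #|[set i : 'I_n | i < m]| = m.
Proof.
move=> mn.
have -> : [set i : 'I_n | i < m] = widen_ord mn @: [set: 'I_m].
  apply/setP => i; rewrite inE; apply/idP/imsetP => [im|[j _ ->]]; last by rewrite /= ltn_ord.
  by exists (Ordinal im) => //; apply: val_inj.
by rewrite card_imset ?cardsT ?card_ord //; by move=> x y /(congr1 val) /= h; apply: val_inj.
Qed.

Lemma card_U n (S : {set 'I_n}) : n./2 - #|S| <= #|Uset S|.
Proof.
rewrite /Uset cardsD card_lt; last by rewrite -divn2 leq_div.
by rewrite leq_sub2l // subset_leq_card // subsetIr.
Qed.

Lemma card_W n (S : {set 'I_n}) : n./2 - #|S| <= #|Wset S|.
Proof.
rewrite /Wset.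
have -> : [set i : 'I_n | n./2 <= i] = ~: [set i : 'I_n | i < n./2].
  by apply/setP => i; rewrite !inE -leqNgt.
rewrite cardsD.
have h := cardsC [set i : 'I_n | i < n./2].
rewrite card_lt ?card_ord in h; last by rewrite -divn2 leq_div.
have h2 : #|~: [set i : 'I_n | i < n./2] :&: S| <= #|S| by rewrite subset_leq_card // subsetIr.
have h3 : n./2 <= n - n./2.
  have := divn_eq n 2; rewrite divn2; have := ltn_pmod n (isT : 0 < 2); lia.
move: h h2 h3; set c := #|~: _|; set d := #|_ :&: S|; set hh := n./2; lia.
Qed.

Lemma bad_sub n k : [set E : {set {set 'I_n}} | simple_graph E && ~~ good_event k E] \subset
  \bigcup_(S : {set 'I_n} | #|S| == k)
     ((\bigcup_(F in powerset (Bs S)) BadSF S F) :|: \bigcup_(B in Bs S) NoCellB S B).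
Proof.
apply/subsetP => E; rewrite inE => /andP[sE].
rewrite /good_event negb_forall => /existsP[S]; rewrite negb_imply => /andP[hSk].
rewrite negb_forall => /existsP[F]; rewrite negb_imply => /andP[sF nex].
apply/bigcupP; exists S => //.
case nE: (nice S E).
- apply/setUP; left; apply/bigcupP; exists F; first by rewrite powersetE.
  rewrite inE sE nE /=; apply/forall_inP => v vU.
  move: nex; rewrite negb_exists => /forallP /(_ v).
  rewrite (U_notS vU) /= negb_forall => /existsP[B]; rewrite negb_imply => /andP[hB neq].
  by apply/exists_inP; exists B; rewrite ?inE.
move/negbT: nE; rewrite /nice negb_forall_in => /exists_inP[B BB hB].
apply/setUP; right; apply/bigcupP; exists B => //.
by rewrite inE sE /= -negb_exists_in.
Qed.

Import Order.TTheory GRing.Theory Num.Theory.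


Lemma binom_le n k : 'C(n, k) <= n ^ k.
Proof.
apply: leq_trans (leq_pmulr _ (fact_gt0 k)) _.
rewrite bin_ffact ffact_prod.
have -> : (n ^ k = \prod_(i < k) n)%N by rewrite prod_nat_const card_ord.
by apply: leq_prod => i _; apply: leq_subr.
Qed.

Local Open Scope ring_scope.

Lemma fail_bound k n : (1 <= k)%N ->
  fail_prob k n <= (n ^ k * (2 * 2 ^ (2 ^ k)))%:R * qq (2 ^ (2 ^ k)) ^+ (n./2 - k).
Proof.
move=> k1.
set M := (2 ^ (2 ^ k))%N; set x := (n./2 - k)%N; set T := #|Simple n|.
have T0 : (0 < T)%N.
  apply/card_gt0P; exists set0; rewrite inE; apply/forall_inP => e; by rewrite inE.
have kM : (2 ^ k <= M)%N by rewrite leq_exp2l // ltnW // ltn_expl.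
have BsM (S : {set 'I_n}) : #|S| = k -> (#|Bs S| <= 2 ^ k)%N.
  move=> hS; rewrite -hS -card_powerset subset_leq_card //.
  by apply/subsetP => B; rewrite !inE => /andP[_ ->].
have hBad (S : {set 'I_n}) F : #|S| = k -> #|BadSF S F|%:R <= T%:R * qq M ^+ x.
  move=> hS; apply: (term_bound _ _ (BadSF_bound S F)).
  - by rewrite leq_exp2l // BsM.
  - by have := card_U S; rewrite hS.
have hNo (S : {set 'I_n}) B : #|S| = k -> #|NoCellB S B|%:R <= T%:R * qq M ^+ x.
  move=> hS; apply: (term_bound _ _ (NoCellB_bound S B)).
  - by rewrite hS.
  - by have := card_W S; rewrite hS.
rewrite /fail_prob ler_pdivrMr ?ltr0n //.
have step1 : (#|[set E : {set {set 'I_n}} | simple_graph E && ~~ good_event k E]| <=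
   \sum_(S : {set 'I_n} | #|S| == k) (\sum_(F in powerset (Bs S)) #|BadSF S F|
       + \sum_(B in Bs S) #|NoCellB S B|))%N.
  apply: leq_trans (subset_leq_card (bad_sub n k)) _.
  apply: leq_trans (card_bigcup_le _ _) _; apply: leq_sum => S _.
  by apply: leq_trans (leq_card_setU _ _) _; apply: leq_add; apply: card_bigcup_le.
rewrite -(ler_nat rat) in step1; apply: le_trans step1 _; rewrite natr_sum.
have step2 : \sum_(S : {set 'I_n} | #|S| == k) ((\sum_(F in powerset (Bs S)) #|BadSF S F|
       + \sum_(B in Bs S) #|NoCellB S B|)%N%:R : rat)
   <= \sum_(S : {set 'I_n} | #|S| == k) ((2 * M)%N%:R * (T%:R * qq M ^+ x)).
  apply: ler_sum => S /eqP hS; rewrite natrD !natr_sum.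
  have h1 : \sum_(i in powerset (Bs S)) (#|BadSF S i|%:R : rat)
            <= \sum_(i in powerset (Bs S)) (T%:R * qq M ^+ x).
    by apply: ler_sum => F _; apply: hBad.
  have h2 : \sum_(i in Bs S) (#|NoCellB S i|%:R : rat) <= \sum_(i in Bs S) (T%:R * qq M ^+ x).
    by apply: ler_sum => B _; apply: hNo.
  apply: le_trans (lerD h1 h2) _.
  rewrite !sumr_const -mulrnDr -[X in X <= _]mulr_natl ler_wpM2r //.
    by rewrite mulr_ge0 ?ler0n // exprn_ge0 // qq_ge0.
  rewrite ler_nat card_powerset mul2n -addnn leq_add //.
    by rewrite leq_exp2l // BsM.
  by apply: leq_trans (BsM S hS) _.
apply: le_trans step2 _.
rewrite (eq_bigl (fun S => S \in [set S : {set 'I_n} | #|S| == k])); last by move=> S; rewrite inE.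
rewrite sumr_const card_draws card_ord -[X in X <= _]mulr_natl mulrA -natrM.
rewrite -/T -mulrA [qq M ^+ x * _]mulrC.
rewrite ler_wpM2r ?mulr_ge0 ?ler0n ?exprn_ge0 ?qq_ge0 // ler_nat leq_mul2r binom_le orbT //.
Qed.

Theorem mainTheorem13 (k : nat) (hk : (1 <= k)%N) :
  negligible (fun n => fail_prob k n).
Proof.
move=> c.
set M := (2 ^ (2 ^ k))%N.
have M0 : (0 < M)%N by rewrite expn_gt0.
have [N0 HN] := evN (k + c) (2 * M) k M0.
exists (maxn N0 1) => n; rewrite geq_max => /andP[nN0 n1].
have f0 : 0 <= fail_prob k n by rewrite /fail_prob divr_ge0 ?ler0n.
rewrite ger0_norm //.
apply: le_lt_trans (fail_bound n hk) _.
set x := (n./2 - k)%N; set y := (x %/ M)%N.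
have hq : qq M ^+ x <= ((2 ^ y)%N%:R)^-1.
  apply: le_trans (ler_wiXn2l (qq_ge0 M) (qq_le1 M) (leq_divM x M)) _.
  rewrite mulnC exprM natrX -exprVn.
  apply: lerXn2r; rewrite ?qualifE /= ?exprn_ge0 ?qq_ge0 ?invr_ge0 ?ler0n //.
  exact: qq_pow.
apply: le_lt_trans (ler_wpM2l (ler0n _ _) hq) _.
have H := HN n nN0; rewrite -/x -/y in H.
rewrite -natrX ltr_pdivrMr ?ltr0n ?expn_gt0 // ltr_pdivlMl ?ltr0n ?expn_gt0 //.
rewrite -natrM ltr_nat ?n1 // mulnA -expnD addnC; first exact: H.
by rewrite n1.
Qed.
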